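(* Let $\alpha\in(0,1]$. For every $j\ge0$, $n\ge1$, every complex number $z$ and every function $g:\mathcal X_j\to\mathbb C$ with $\|g\|_{\alpha,\xi_j}\le1$, $$\|L_{j,z}^ng-L_j^ng\|_{\alpha,\xi_{j+n}}\le |z|e^{|\mathrm{Re}(z)|\|S_{j,n}f\|_\infty}\|L_j^n\mathbf 1\|_\infty\Big((1+\Gamma_{j,n}^\alpha+2Q_{j,n}(\phi))\|S_{j,n}f\|_\infty+Q_{j,n}(f)\Big)=:R_{j,n}(z).$$ Consequently, $$\|L_{j,z}^n-L_j^n\|_\alpha\le 3\xi_{j+n}^{-1}R_{j,n}(z),$$ where $\|\cdot\|_\alpha$ here denotes the operator norm with respect to the $\alpha$-Hölder norms $\|\cdot\|_\alpha$ on $\mathcal X_j$ and $\mathcal X_{j+n}$.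
   Context: $(\mathcal X_j,\rho_j)_{j\ge0}$ are metric spaces with $\mathrm{diam}(\mathcal X_j)\le1$ and $T_j:\mathcal X_j\to\mathcal X_{j+1}$ are maps. There are sequences $\gamma_j\ge1$ and $\xi_j\in(0,1]$ such that for all $j$ and all $x,x'\in\mathcal X_{j+1}$ with $\rho_{j+1}(x,x')\le\xi_{j+1}$ one can write $T_j^{-1}\{x\}=\{y_{j,1},\dots,y_{j,d_j}\}$, $T_j^{-1}\{x'\}=\{y'_{j,1},\dots,y'_{j,d_j}\}$ (with $d_j=d_j(x)$) so that $\rho_j(y_{j,k},y'_{j,k})\le\min(\gamma_j^{-1}\rho_{j+1}(x,x'),\xi_j)$ for every $k$. $T_j^n=T_{j+n-1}\circ\cdots\circ T_j$. For $0<r\le1$ and $g$ on $\mathcal X_j$: $v_{\alpha,r}(g)=\sup\{|g(x)-g(x')|/\rho_j(x,x')^\alpha: 0<\rho_j(x,x')\le r\}$, $\|g\|_{\alpha,r}=\|g\|_\infty+v_{\alpha,r}(g)$, $v_\alpha=v_{\alpha,1}$, $\|g\|_\alpha=\|g\|_{\alpha,1}$. $\phi_j,f_j:\mathcal X_j\to\mathbb R$ are functions with $\|\phi_j\|_\alpha<\infty$ (and $f_j$ Hölder). For $z\in\mathbb C$, $L_{j,z}g(x)=\sum_{y:T_jy=x}e^{\phi_j(y)+zf_j(y)}g(y)$, $L_{j,z}^n=L_{j+n-1,z}\circ\cdots\circ L_{j,z}$, $L_j=L_{j,0}$, $L_j^n=L_{j,0}^n$, $\mathbf 1$ the constant function $1$.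 $S_{j,n}f=\sum_{k=0}^{n-1}f_{j+k}\circ T_j^k$, $\Gamma_{j,n}=\prod_{s=j}^{j+n-1}\gamma_s^{-1}$, and for a sequence of functions $h=(h_j)$, $Q_{j,n}(h)=\sum_{k=0}^{n-1}v_{\alpha,\xi_{j+k}}(h_{j+k})\,(\Gamma_{j+k,n-k})^\alpha$. *)

(* Defs.v *)
From Stdlib Require Import Reals List Permutation.
From Coquelicot Require Import Coquelicot.
Open Scope R_scope.

Definition cexp (w : C) : C := (exp (Re w) * cos (Im w), exp (Re w) * sin (Im w)).

(* supremum of a set of nonnegative (extended) reals; sup of the empty set is 0 *)
Definition Rbar_sup (P : Rbar -> Prop) : Rbar := Rbar_lub (fun t => t = Finite 0 \/ P t).

Definition supnorm {A : Type} (g : A -> C) : Rbar :=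
  Rbar_sup (fun t => exists x, t = Finite (Cmod (g x))).

Definition holder_var {A : Type} (rho : A -> A -> R) (alpha r : R) (g : A -> C) : Rbar :=
  Rbar_sup (fun t => exists x x', 0 < rho x x' /\ rho x x' <= r /\
       t = Finite (Cmod (Cminus (g x) (g x')) / Rpower (rho x x') alpha)).

Definition holder_norm {A : Type} (rho : A -> A -> R) (alpha r : R) (g : A -> C) : Rbar :=
  Rbar_plus (supnorm g) (holder_var rho alpha r g).

Definition metric_diam1 {A : Type} (rho : A -> A -> R) : Prop :=
  (forall x y, 0 <= rho x y) /\
  (forall x y, rho x y = 0 <-> x = y) /\
  (forall x y, rho x y = rho y x) /\
  (forall x y w, rho x w <= rho x y + rho y w) /\
  (forall x y, rho x y <= 1).

Fixpoint Titer (X : nat -> Type) (T : forall j, X j -> X (S j)) (j k : nat) : X j -> X (k + j)%nat :=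
  match k as k0 return X j -> X (k0 + j)%nat with
  | O => fun x => x
  | S m => fun x => T (m + j)%nat (Titer X T j m x)
  end.

(* transfer operator L_{j,z}; pre j x enumerates T_j^{-1}{x} *)
Definition Lop (X : nat -> Type) (pre : forall j, X (S j) -> list (X j))
  (phi f : forall j, X j -> R) (j : nat) (z : C) (g : X j -> C) : X (S j) -> C :=
  fun x => fold_right Cplus (RtoC 0)
    (map (fun y => Cmult (cexp (Cplus (RtoC (phi j y)) (Cmult z (RtoC (f j y))))) (g y)) (pre j x)).

Fixpoint Lit (X : nat -> Type) (pre : forall j, X (S j) -> list (X j))
  (phi f : forall j, X j -> R) (z : C) (j n : nat) : (X j -> C) -> X (n + j)%nat -> C :=
  match n as n0 return (X j -> C) -> X (n0 + j)%nat -> C with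
  | O => fun g => g
  | S m => fun g => Lop X pre phi f (m + j)%nat z (Lit X pre phi f z j m g)
  end.

Fixpoint Ssum (X : nat -> Type) (T : forall j, X j -> X (S j)) (f : forall j, X j -> R)
  (j n : nat) : X j -> R :=
  match n with
  | O => fun _ => 0
  | S m => fun x => Ssum X T f j m x + f (m + j)%nat (Titer X T j m x)
  end.

Fixpoint Gamma (gamma : nat -> R) (j n : nat) : R :=
  match n with
  | O => 1
  | S m => Gamma gamma j m * / gamma (j + m)%nat
  end.

Definition Qsum (X : nat -> Type) (rho : forall j, X j -> X j -> R) (gamma xi : nat -> R)
  (alpha : R) (h : forall j, X j -> R) (j n : nat) : Rbar :=
  fold_right Rbar_plus (Finite 0)
    (map (fun k => Rbar_mult (holder_var (rho (j + k)%nat) alpha (xi (j + k)%nat)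
                                 (fun x => RtoC (h (j + k)%nat x)))
                             (Finite (Rpower (Gamma gamma (j + k)%nat (n - k)%nat) alpha)))
         (seq 0 n)).

(* operator norm w.r.t. the alpha-Hölder norms ||.||_alpha = ||.||_{alpha,1} *)
Definition opnorm {A B : Type} (rhoA : A -> A -> R) (rhoB : B -> B -> R) (alpha : R)
  (Op : (A -> C) -> B -> C) : Rbar :=
  Rbar_sup (fun t => exists g : A -> C, Rbar_le (holder_norm rhoA alpha 1 g) (Finite 1) /\
                      t = holder_norm rhoB alpha 1 (Op g)).

(* Main.v *)
Require Import Defs.
From Stdlib Require Import Reals List Permutation Lia Lra.
From Coquelicot Require Import Coquelicot.
Open Scope R_scope.

Lemma exp_le (x y : R) : x <= y -> exp x <= exp y.
Proof.
  intros H; destruct (Rle_lt_or_eq_dec _ _ H) as [H'|H'].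
  - left; apply exp_increasing; auto.
  - subst; lra.
Qed.

Lemma cexp_add (p q : C) : cexp (Cplus p q) = Cmult (cexp p) (cexp q).
Proof.
  unfold cexp; simpl. rewrite exp_plus, cos_plus, sin_plus.
  apply injective_projections; unfold Re, Im; simpl; ring.
Qed.

Lemma Cmod_cexp (p : C) : Cmod (cexp p) = exp (Re p).
Proof.
  unfold cexp, Cmod, Re, Im; cbn [fst snd].
  replace ((exp (fst p) * cos (snd p)) ^ 2 + (exp (fst p) * sin (snd p)) ^ 2)
    with (exp (fst p) ^ 2) by (pose proof (sin2_cos2 (snd p)); unfold Rsqr in *; nra).
  rewrite sqrt_pow2; auto. left; apply exp_pos.
Qed.

Lemma cexp_real (p : C) : Im p = 0 -> cexp p = RtoC (exp (Re p)).
Proof.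
  intros H. unfold cexp. rewrite H, cos_0, sin_0.
  apply injective_projections; unfold Re, Im; simpl; ring.
Qed.

Lemma exp_m1_bound (u : R) : Rabs (exp u - 1) <= Rabs u * exp (Rmax 0 u).
Proof.
  destruct (Rle_lt_dec 0 u) as [H|H].
  - rewrite Rmax_right by lra. pose proof (exp_ineq1_le (-u)).
    pose proof (exp_pos u). rewrite exp_Ropp in H0.
    assert (1 <= exp u) by (rewrite <- exp_0; apply exp_le; lra).
    rewrite Rabs_right by lra. rewrite Rabs_right by lra.
    assert (exp u * / exp u = 1) by (field; lra).
    assert (exp u * (1 + - u) <= exp u * / exp u) by (apply Rmult_le_compat_l; lra).
    nra.
  - rewrite Rmax_left by lra. rewrite exp_0.
    pose proof (exp_ineq1_le u).
    assert (exp u < 1) by (rewrite <- exp_0; apply exp_increasing; lra).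
    rewrite Rabs_left by lra. rewrite Rabs_left by lra. lra.
Qed.

Lemma sin_abs_le_pos (x : R) : 0 < x -> Rabs (sin x) <= x.
Proof.
  intros H. pose proof (sin_lt_x x H). pose proof (SIN_bound x).
  destruct (Rle_lt_dec x 1).
  - assert (0 <= sin x). { apply sin_ge_0; try lra. pose proof PI2_1. lra. }
    rewrite Rabs_right; lra.
  - unfold Rabs; destruct (Rcase_abs (sin x)); lra.
Qed.

Lemma sin_abs_le (x : R) : Rabs (sin x) <= Rabs x.
Proof.
  destruct (Rtotal_order x 0) as [H|[H|H]].
  - replace x with (- (- x)) by ring. rewrite sin_neg, Rabs_Ropp, Rabs_Ropp.
    rewrite (Rabs_right (-x)) by lra. apply sin_abs_le_pos; lra.
  - subst. rewrite sin_0. rewrite Rabs_R0. lra.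
  - rewrite (Rabs_right x) by lra. apply sin_abs_le_pos; lra.
Qed.

Lemma cexp_m1_bound (w : C) : Cmod (Cminus (cexp w) 1) <= Cmod w * exp (Rmax 0 (Re w)).
Proof.
  destruct w as [u v]. unfold Re; simpl fst.
  set (E := exp (Rmax 0 u)).
  assert (HE : 0 < E) by apply exp_pos.
  assert (H1 : (exp u - 1)^2 <= u^2 * E^2).
  { pose proof (exp_m1_bound u). fold E in H.
    pose proof (Rabs_pos (exp u - 1)).
    assert (HH : Rabs (exp u - 1) ^ 2 <= (Rabs u * E)^2).
    { apply pow_incr; lra. }
    rewrite Rpow_mult_distr in HH.
    rewrite !pow2_abs in HH. lra. }
  assert (H2 : exp u <= E^2).
  { unfold E. replace (exp (Rmax 0 u) ^2) with (exp (Rmax 0 u + Rmax 0 u)) by (rewrite exp_plus; ring).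
    apply exp_le.
    unfold Rmax; destruct (Rle_dec 0 u); lra. }
  assert (H3 : 4 * (sin (v/2))^2 <= v^2).
  { pose proof (sin_abs_le (v/2)).
    pose proof (Rabs_pos (sin (v/2))).
    assert (HH : Rabs (sin (v/2)) ^2 <= Rabs (v/2) ^2) by (apply pow_incr; lra).
    rewrite !pow2_abs in HH. lra. }
  assert (Hc : cos v = 1 - 2 * sin (v/2) ^ 2).
  { replace v with (2 * (v/2)) at 1 by field. rewrite cos_2a_sin. unfold Rsqr; ring. }
  unfold Cmod, cexp, Cminus, Re, Im; cbn [fst snd Cplus Copp RtoC].
  rewrite <- (sqrt_pow2 E) by lra.
  rewrite <- sqrt_mult_alt by (apply Rplus_le_le_0_compat; apply pow2_ge_0).
  apply sqrt_le_1_alt.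
  pose proof (sin2_cos2 v) as Hsc. unfold Rsqr in Hsc.
  pose proof (exp_pos u).
  assert (Hs : sin v ^ 2 = 1 - cos v ^ 2) by (rewrite <- Hsc; ring).
  rewrite Hc in Hs.
  assert (Heq : (exp u * cos v + - (1)) ^ 2 + (exp u * sin v + - 0) ^ 2
     = (exp u - 1)^2 + exp u * (4 * sin (v/2) ^2)).
  { replace ((exp u * sin v + - 0) ^ 2) with (exp u ^2 * sin v ^ 2) by ring.
    rewrite Hs, Hc. ring. }
  rewrite Heq.
  assert (exp u * (4 * sin (v/2) ^2) <= E^2 * v^2).
  { apply Rmult_le_compat; try lra. apply Rmult_le_pos; try lra. apply pow2_ge_0. }
  lra.
Qed.


Lemma cexp_diff (b b' : C) :
  Cmod (Cminus (cexp b) (cexp b')) <= Cmod (Cminus b b') * exp (Rmax (Re b) (Re b')).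
Proof.
  assert (E : cexp b = Cmult (cexp b') (cexp (Cminus b b'))).
  { rewrite <- cexp_add. f_equal. ring. }
  rewrite E.
  replace (Cminus (Cmult (cexp b') (cexp (Cminus b b'))) (cexp b'))
    with (Cmult (cexp b') (Cminus (cexp (Cminus b b')) 1)) by ring.
  rewrite Cmod_mult, Cmod_cexp.
  pose proof (cexp_m1_bound (Cminus b b')).
  assert (HR : Re (Cminus b b') = Re b - Re b') by (unfold Re, Cminus; simpl; ring).
  rewrite HR in H.
  assert (exp (Re b') * exp (Rmax 0 (Re b - Re b')) = exp (Rmax (Re b) (Re b'))).
  { rewrite <- exp_plus. f_equal. unfold Rmax.
    destruct (Rle_dec 0 (Re b - Re b')); destruct (Rle_dec (Re b) (Re b')); lra. }
  rewrite <- H0.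
  pose proof (exp_pos (Re b')).
  apply Rmult_le_compat_l with (r := exp (Re b')) in H; lra.
Qed.

Lemma exp_diff (a a' : R) : Rabs (exp a - exp a') <= Rabs (a - a') * (exp a + exp a').
Proof.
  replace (exp a - exp a') with (exp a' * (exp (a - a') - 1))
    by (unfold Rminus; rewrite exp_plus, exp_Ropp; field; apply Rgt_not_eq, exp_pos).
  rewrite Rabs_mult. rewrite (Rabs_right (exp a')) by (left; apply exp_pos).
  pose proof (exp_m1_bound (a - a')).
  assert (exp a' * exp (Rmax 0 (a - a')) <= exp a + exp a').
  { rewrite <- exp_plus. unfold Rmax. destruct (Rle_dec 0 (a - a')).
    - replace (a' + (a - a')) with a by ring. pose proof (exp_pos a'). lra.
    - replace (a' + 0) with a' by ring. pose proof (exp_pos a). lra. }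
  pose proof (exp_pos a'). pose proof (Rabs_pos (a - a')).
  apply Rmult_le_compat_l with (r := exp a') in H; try lra.
  assert (Rabs (a - a') * (exp a' * exp (Rmax 0 (a - a'))) <= Rabs (a - a') * (exp a + exp a'))
    by (apply Rmult_le_compat_l; lra).
  nra.
Qed.

Definition csum (l : list C) : C := fold_right Cplus (RtoC 0) l.
Definition rsum (l : list R) : R := fold_right Rplus 0 l.

Lemma csum_perm (l l' : list C) : Permutation l l' -> csum l = csum l'.
Proof.
  induction 1; unfold csum in *; simpl; auto.
  - rewrite IHPermutation; auto.
  - ring.
  - congruence.
Qed.

Lemma rsum_perm (l l' : list R) : Permutation l l' -> rsum l = rsum l'.
Proof.
  induction 1; unfold rsum in *; simpl; auto.
  - rewrite IHPermutation; auto.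
  - ring.
  - congruence.
Qed.

Lemma csum_app (l l' : list C) : csum (l ++ l') = Cplus (csum l) (csum l').
Proof. induction l; unfold csum in *; simpl. ring. rewrite IHl; ring. Qed.

Lemma rsum_app (l l' : list R) : rsum (l ++ l') = rsum l + rsum l'.
Proof. induction l; unfold rsum in *; simpl. ring. rewrite IHl; ring. Qed.

Lemma Cmod_csum (l : list C) : Cmod (csum l) <= rsum (map Cmod l).
Proof.
  induction l; unfold csum, rsum in *; simpl.
  - rewrite Cmod_0; lra.
  - eapply Rle_trans. apply Cmod_triangle. apply Rplus_le_compat_l; exact IHl.
Qed.

Lemma rsum_nonneg (l : list R) : List.Forall (fun x : R => 0 <= x) l -> 0 <= rsum l.
Proof. induction 1 as [|x l Hx Hl IH]; unfold rsum in *; simpl. lra. apply Rplus_le_le_0_compat; assumption. Qed.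

Lemma sup_le (P : Rbar -> Prop) (B : Rbar) :
  Rbar_le (Finite 0) B -> (forall t, P t -> Rbar_le t B) -> Rbar_le (Rbar_sup P) B.
Proof.
  intros H0 H. unfold Rbar_sup, Rbar_lub. destruct (Rbar_ex_lub _) as [l [Hub Hl]]; simpl.
  apply Hl. intros t [Ht|Ht]. subst; auto. auto.
Qed.

Lemma sup_ge (P : Rbar -> Prop) (t : Rbar) : P t -> Rbar_le t (Rbar_sup P).
Proof.
  intros H. unfold Rbar_sup, Rbar_lub. destruct (Rbar_ex_lub _) as [l [Hub Hl]]; simpl.
  exact (Hub _ (or_intror H)).
Qed.

Lemma sup_nonneg (P : Rbar -> Prop) : Rbar_le (Finite 0) (Rbar_sup P).
Proof.
  unfold Rbar_sup, Rbar_lub. destruct (Rbar_ex_lub _) as [l [Hub Hl]]; simpl.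
  exact (Hub _ (or_introl eq_refl)).
Qed.

Lemma sup_mono (P Q : Rbar -> Prop) : (forall t, P t -> Q t) -> Rbar_le (Rbar_sup P) (Rbar_sup Q).
Proof.
  intros H. apply sup_le. apply sup_nonneg. intros t Ht. apply sup_ge. auto.
Qed.


Lemma Rpower_pos (x a : R) : 0 < Rpower x a.
Proof. unfold Rpower; apply exp_pos. Qed.

Lemma fin_of_le (S : Rbar) (B : R) : Rbar_le (Finite 0) S -> Rbar_le S (Finite B) -> S = Finite (real S).
Proof. destruct S; simpl; intros; try tauto; auto. Qed.

Lemma hv_bound {A : Type} (rho : A -> A -> R) (alpha r : R) (h : A -> C) (x x' : A) :
  is_finite (holder_var rho alpha r h) -> 0 < rho x x' -> rho x x' <= r ->
  Cmod (Cminus (h x) (h x')) <= real (holder_var rho alpha r h) * Rpower (rho x x') alpha.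
Proof.
  intros Hf H1 H2.
  assert (Rbar_le (Finite (Cmod (Cminus (h x) (h x')) / Rpower (rho x x') alpha)) (holder_var rho alpha r h)).
  { apply sup_ge. exists x, x'. auto. }
  rewrite <- Hf in H. simpl in H.
  pose proof (Rpower_pos (rho x x') alpha).
  apply Rmult_le_compat_r with (r := Rpower (rho x x') alpha) in H; try lra.
  unfold Rdiv in H. rewrite Rmult_assoc, Rinv_l, Rmult_1_r in H; lra.
Qed.

Lemma sn_bound {A : Type} (h : A -> C) (x : A) :
  is_finite (supnorm h) -> Cmod (h x) <= real (supnorm h).
Proof.
  intros Hf.
  assert (Rbar_le (Finite (Cmod (h x))) (supnorm h)).
  { apply sup_ge. exists x. auto. }
  rewrite <- Hf in H. exact H.
Qed.

Lemma holder_parts {A : Type} (rho : A -> A -> R) (alpha r : R) (g : A -> C) (B : R) :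
  Rbar_le (holder_norm rho alpha r g) (Finite B) ->
  Rbar_le (supnorm g) (Finite B) /\ Rbar_le (holder_var rho alpha r g) (Finite B).
Proof.
  unfold holder_norm. intros H.
  pose proof (sup_nonneg (fun t => exists x, t = Finite (Cmod (g x)))) as H1.
  pose proof (sup_nonneg (fun t => exists x x', 0 < rho x x' /\ rho x x' <= r /\
       t = Finite (Cmod (Cminus (g x) (g x')) / Rpower (rho x x') alpha))) as H2.
  unfold supnorm, holder_var in *.
  destruct (Rbar_sup _); destruct (Rbar_sup _); simpl in *; try tauto; split; lra.
Qed.

Lemma holder_fin {A : Type} (rho : A -> A -> R) (alpha r : R) (g : A -> C) :
  is_finite (holder_norm rho alpha r g) ->
  is_finite (supnorm g) /\ is_finite (holder_var rho alpha r g).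
Proof.
  unfold holder_norm. intros H.
  pose proof (sup_nonneg (fun t => exists x, t = Finite (Cmod (g x)))) as H1.
  pose proof (sup_nonneg (fun t => exists x x', 0 < rho x x' /\ rho x x' <= r /\
       t = Finite (Cmod (Cminus (g x) (g x')) / Rpower (rho x x') alpha))) as H2.
  unfold supnorm, holder_var, is_finite in *.
  destruct (Rbar_sup _); destruct (Rbar_sup _); simpl in *; try tauto; try discriminate; auto.
Qed.

Lemma hv_mono {A : Type} (rho : A -> A -> R) (alpha r r' : R) (g : A -> C) :
  r <= r' -> Rbar_le (holder_var rho alpha r g) (holder_var rho alpha r' g).
Proof.
  intros H. apply sup_mono. intros t (x & x' & H1 & H2 & H3). exists x, x'. repeat split; auto; lra.
Qed.

Lemma hv_fin_small {A : Type} (rho : A -> A -> R) (alpha r : R) (g : A -> C) :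
  r <= 1 -> is_finite (holder_norm rho alpha 1 g) -> is_finite (holder_var rho alpha r g).
Proof.
  intros Hr H. apply holder_fin in H. destruct H as [_ H].
  pose proof (hv_mono rho alpha r 1 g Hr).
  pose proof (sup_nonneg (fun t => exists x x', 0 < rho x x' /\ rho x x' <= r /\
       t = Finite (Cmod (Cminus (g x) (g x')) / Rpower (rho x x') alpha))) as H2.
  change (Rbar_le (Finite 0) (holder_var rho alpha r g)) in H2.
  unfold is_finite in *. rewrite <- H in H0.
  destruct (holder_var rho alpha r g); simpl in *; tauto.
Qed.

Lemma hn_le_fin {A : Type} (rho : A -> A -> R) (alpha xi : R) (D : A -> C) (s v : R) :
  0 <= s -> 0 <= v ->
  (forall x, Cmod (D x) <= s) ->
  (forall x x', 0 < rho x x' -> rho x x' <= xi ->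
      Cmod (Cminus (D x) (D x')) <= Rpower (rho x x') alpha * v) ->
  Rbar_le (holder_norm rho alpha xi D) (Finite (s + v)).
Proof.
  intros Hs Hv H1 H2. unfold holder_norm.
  change (Finite (s + v)) with (Rbar_plus (Finite s) (Finite v)).
  apply Rbar_plus_le_compat.
  - apply sup_le. simpl; auto. intros t [x ->]. simpl. auto.
  - apply sup_le. simpl; auto. intros t (x & x' & H3 & H4 & ->). simpl.
    pose proof (H2 x x' H3 H4). pose proof (Rpower_pos (rho x x') alpha).
    apply Rle_div_l; auto. lra.
Qed.

Lemma final_rbar {A : Type} (rho : A -> A -> R) (alpha xi : R) (D : A -> C) (L1 : A -> R)
  (M : Rbar) (c K1 K2 : R) :
  0 <= c -> 0 <= K1 -> 0 <= K2 -> (forall x, 0 <= L1 x) ->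
  (forall x, Rbar_le (Finite (L1 x)) M) -> Rbar_le (Finite 0) M ->
  (forall x, Cmod (D x) <= c * K1 * L1 x) ->
  (forall x x', 0 < rho x x' -> rho x x' <= xi ->
      Cmod (Cminus (D x) (D x')) <= Rpower (rho x x') alpha * (c * K2 * Rmax (L1 x) (L1 x'))) ->
  Rbar_le (holder_norm rho alpha xi D) (Rbar_mult (Finite c) (Rbar_mult M (Finite (K1 + K2)))).
Proof.
  intros Hc HK1 HK2 HL HLM HM H1 H2.
  destruct M as [m| |]; simpl in HM; try tauto.
  - simpl. replace (c * (m * (K1 + K2))) with (c * K1 * m + c * K2 * m) by ring.
    apply hn_le_fin.
    + apply Rmult_le_pos; [apply Rmult_le_pos|]; lra.
    + apply Rmult_le_pos; [apply Rmult_le_pos|]; lra.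
    + intros x. eapply Rle_trans. apply H1. apply Rmult_le_compat_l. apply Rmult_le_pos; lra.
      apply HLM.
    + intros x x' Ha Hb. eapply Rle_trans. apply H2; auto.
      apply Rmult_le_compat_l. left; apply Rpower_pos.
      apply Rmult_le_compat_l. apply Rmult_le_pos; lra.
      pose proof (HLM x); pose proof (HLM x'); simpl in *.
      apply Rmax_lub; auto.
  - destruct (Req_dec c 0) as [Hc0|Hc0].
    + subst c. rewrite Rbar_mult_0_l.
      replace (Finite 0) with (Finite (0 + 0)) by (f_equal; ring).
      apply hn_le_fin; try lra.
      * intros x. specialize (H1 x). lra.
      * intros x x' Ha Hb. specialize (H2 x x' Ha Hb). lra.
    + destruct (Req_dec (K1 + K2) 0) as [HK0|HK0].
      * assert (K1 = 0) by lra. assert (K2 = 0) by lra. subst K1 K2.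
        rewrite HK0, Rbar_mult_0_r, Rbar_mult_0_r.
        replace (Finite 0) with (Finite (0 + 0)) by (f_equal; ring).
        apply hn_le_fin; try lra.
        -- intros x. specialize (H1 x). rewrite Rmult_0_r, Rmult_0_l in H1. exact H1.
        -- intros x x' Ha Hb. specialize (H2 x x' Ha Hb). rewrite Rmult_0_r, Rmult_0_l, Rmult_0_r in H2. rewrite Rmult_0_r. exact H2.
      * assert (Rbar_mult (Finite c) (Rbar_mult p_infty (Finite (K1 + K2))) = p_infty).
        { unfold Rbar_mult, Rbar_mult'.
          destruct (Rle_dec 0 (K1 + K2)); try lra.
          destruct (Rle_lt_or_eq_dec 0 (K1 + K2) r); try lra.
          destruct (Rle_dec 0 c); try lra.
          destruct (Rle_lt_or_eq_dec 0 c r1); try lra. auto. }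
        rewrite H. destruct (holder_norm rho alpha xi D); simpl; auto.
Qed.

Lemma mult_pinf (a : R) : 0 < a -> Rbar_mult (Finite a) p_infty = p_infty.
Proof.
  intros H. unfold Rbar_mult, Rbar_mult'. destruct (Rle_dec 0 a); try lra.
  destruct (Rle_lt_or_eq_dec 0 a r); try lra. auto.
Qed.

Lemma Rpower_ge_self (x a : R) : 0 < x <= 1 -> 0 < a <= 1 -> x <= Rpower x a.
Proof.
  intros Hx Ha. rewrite <- (Rpower_1 x) at 1 by lra. unfold Rpower.
  apply exp_le. assert (ln x <= 0).
  { destruct (Req_dec x 1). subst; rewrite ln_1; lra. left; rewrite <- ln_1; apply ln_increasing; lra. }
  nra.
Qed.

Lemma holder1_le {A : Type} (rho : A -> A -> R) (alpha xi : R) (h : A -> C) :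
  metric_diam1 rho -> 0 < alpha <= 1 -> 0 < xi <= 1 ->
  Rbar_le (holder_norm rho alpha 1 h) (Rbar_mult (Finite (3 / xi)) (holder_norm rho alpha xi h)).
Proof.
  intros Hm Ha Hxi.
  pose proof (sup_nonneg (fun t => exists x, t = Finite (Cmod (h x)))) as H1.
  pose proof (sup_nonneg (fun t => exists x x', 0 < rho x x' /\ rho x x' <= xi /\
       t = Finite (Cmod (Cminus (h x) (h x')) / Rpower (rho x x') alpha))) as H2.
  change (Rbar_le (Finite 0) (supnorm h)) in H1.
  change (Rbar_le (Finite 0) (holder_var rho alpha xi h)) in H2.
  assert (H3 : 0 < 3 / xi) by (apply Rdiv_lt_0_compat; lra).
  unfold holder_norm.
  destruct (supnorm h) as [s| |] eqn:Es; [| | simpl in H1; tauto].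
  - destruct (holder_var rho alpha xi h) as [v| |] eqn:Ev; [| | simpl in H2; tauto].
    + simpl in H1, H2. simpl.
      assert (Hs : forall x, Cmod (h x) <= s).
      { intros x. pose proof (sn_bound h x). rewrite Es in H. apply H. reflexivity. }
      assert (Hv : Rbar_le (holder_var rho alpha 1 h) (Finite (v + 2 * s / xi))).
      { apply sup_le. simpl. apply Rplus_le_le_0_compat; auto.
        apply Rmult_le_pos; [lra| left; apply Rinv_0_lt_compat; lra].
        intros t (x & x' & Ha1 & Ha2 & ->). simpl.
        pose proof (Rpower_pos (rho x x') alpha).
        destruct (Rle_lt_dec (rho x x') xi).
        - pose proof (hv_bound rho alpha xi h x x'). rewrite Ev in H0.
          assert (Cmod (Cminus (h x) (h x')) <= v * Rpower (rho x x') alpha) by (apply H0; auto; reflexivity).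
          assert (Cmod (Cminus (h x) (h x')) / Rpower (rho x x') alpha <= v) by (apply Rle_div_l; lra).
          assert (0 <= 2 * s / xi) by (apply Rmult_le_pos; [lra| left; apply Rinv_0_lt_compat; lra]).
          lra.
        - assert (Cmod (Cminus (h x) (h x')) <= 2 * s).
          { unfold Cminus. eapply Rle_trans. apply Cmod_triangle. rewrite Cmod_opp.
            pose proof (Hs x); pose proof (Hs x'); lra. }
          assert (xi <= Rpower (rho x x') alpha).
          { eapply Rle_trans. apply (Rpower_ge_self xi alpha); lra.
            apply Rle_Rpower_l; lra. }
          assert (Cmod (Cminus (h x) (h x')) / Rpower (rho x x') alpha <= 2 * s / xi).
          { apply Rle_div_l. lra. unfold Rdiv. rewrite Rmult_assoc.
            apply Rle_trans with (2 * s). auto.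
            rewrite <- (Rmult_1_r (2 * s)) at 1. apply Rmult_le_compat_l. lra.
            apply Rle_trans with (/ xi * xi). right; field; lra.
            apply Rmult_le_compat_l. left; apply Rinv_0_lt_compat; lra. auto. }
          lra. }
      destruct (holder_var rho alpha 1 h) as [w| |]; simpl in Hv; try tauto.
      * simpl. 
        assert (s <= s / xi).
        { unfold Rdiv. rewrite <- (Rmult_1_r s) at 1. apply Rmult_le_compat_l. lra.
          rewrite <- Rinv_1. apply Rinv_le_contravar; lra. }
        assert (v <= v / xi).
        { unfold Rdiv. rewrite <- (Rmult_1_r v) at 1. apply Rmult_le_compat_l. lra.
          rewrite <- Rinv_1. apply Rinv_le_contravar; lra. }
        replace (3 / xi * (s + v)) with (s / xi + 2 * s / xi + 3 * (v / xi)) by (field; lra).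
        lra.
      * pose proof (sup_nonneg (fun t => exists x x', 0 < rho x x' /\ rho x x' <= 1 /\
           t = Finite (Cmod (Cminus (h x) (h x')) / Rpower (rho x x') alpha))) as H4.
        change (Rbar_le (Finite 0) (holder_var rho alpha 1 h)) in H4.
        change (Rbar_plus (Finite s) p_infty) with p_infty. rewrite (mult_pinf _ H3).
        destruct (Rbar_plus _ _); simpl; auto.
  - destruct (holder_var rho alpha xi h) as [v| |]; simpl in H2; try tauto;
    [change (Rbar_plus p_infty (Finite v)) with p_infty | change (Rbar_plus p_infty p_infty) with p_infty];
    rewrite (mult_pinf _ H3); destruct (Rbar_plus _ _); simpl; auto.
Qed.



Fixpoint Pre (X : nat -> Type) (pre : forall j, X (S j) -> list (X j)) (j n : nat) {struct n}
  : X (n + j)%nat -> list (X j) :=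
  match n as n0 return X (n0 + j)%nat -> list (X j) with
  | O => fun x => x :: nil
  | S m => fun x => flat_map (Pre X pre j m) (pre (m + j)%nat x)
  end.

Lemma Pre_Titer (X : nat -> Type) (T : forall j, X j -> X (S j)) (pre : forall j, X (S j) -> list (X j))
  (Hpre : forall j (x : X (S j)) (y : X j), In y (pre j x) <-> T j y = x) (j n : nat) :
  forall (x : X (n + j)%nat) (y : X j), In y (Pre X pre j n x) -> Titer X T j n y = x.
Proof.
  induction n as [|n IH]; simpl.
  - intros x y [->|[]]. reflexivity.
  - intros x y H. apply in_flat_map in H. destruct H as [w [Hw Hy]].
    rewrite (IH w y Hy). apply Hpre. exact Hw.
Qed.

Lemma csum_flat_map {A B : Type} (F : B -> C) (G : A -> list B) (l : list A) :
  csum (map F (flat_map G l)) = csum (map (fun w => csum (map F (G w))) l).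
Proof.
  induction l as [|a l IH]; simpl. reflexivity.
  rewrite map_app, csum_app, IH. reflexivity.
Qed.

Lemma csum_scale {B : Type} (c : C) (F : B -> C) (l : list B) :
  Cmult c (csum (map F l)) = csum (map (fun y => Cmult c (F y)) l).
Proof.
  induction l as [|a l IH]; unfold csum in *; simpl. ring.
  rewrite <- IH. ring.
Qed.

Lemma Lit_sum (X : nat -> Type) (T : forall j, X j -> X (S j)) (pre : forall j, X (S j) -> list (X j))
  (phi f : forall j, X j -> R)
  (Hpre : forall j (x : X (S j)) (y : X j), In y (pre j x) <-> T j y = x) (z : C) (j n : nat)
  (g : X j -> C) (x : X (n + j)%nat) :
  Lit X pre phi f z j n g x =
  csum (map (fun y => Cmult (cexp (Cplus (RtoC (Ssum X T phi j n y)) (Cmult z (RtoC (Ssum X T f j n y))))) (g y))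
            (Pre X pre j n x)).
Proof.
  revert x. induction n as [|n IH]; intros x.
  - simpl. unfold csum; simpl.
    rewrite cexp_real. 2:{ unfold Im; simpl; ring. }
    replace (Re (Cplus (RtoC 0) (Cmult z (RtoC 0)))) with 0 by (unfold Re; simpl; ring).
    rewrite exp_0. ring.
  - cbn [Lit Pre]. unfold Lop. rewrite csum_flat_map.
    change (fold_right Cplus (RtoC 0)) with csum.
    f_equal. apply map_ext_in. intros w Hw.
    rewrite IH, csum_scale. f_equal. apply map_ext_in. intros y Hy.
    cbn [Ssum]. rewrite (Pre_Titer X T pre Hpre j n w y Hy).
    rewrite Cmult_assoc, <- cexp_add. f_equal. f_equal.
    rewrite !RtoC_plus. ring.
Qed.


Lemma pairs_of_nth {A : Type} (P : A -> A -> Prop) (ys : list A) :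
  forall ys' : list A, length ys = length ys' ->
  (forall k y y', nth_error ys k = Some y -> nth_error ys' k = Some y' -> P y y') ->
  exists ps, map fst ps = ys /\ map snd ps = ys' /\ List.Forall (fun p => P (fst p) (snd p)) ps.
Proof.
  induction ys as [|a ys IH]; intros ys' Hl H.
  - destruct ys'; simpl in Hl; try discriminate. exists nil. simpl; auto.
  - destruct ys' as [|b ys']; simpl in Hl; try discriminate.
    destruct (IH ys') as (ps & H1 & H2 & H3). lia.
    { intros k y y' Ha Hb. apply (H (S k)); auto. }
    exists ((a, b) :: ps). simpl. rewrite H1, H2. repeat split; auto.
    constructor; auto. simpl. apply (H 0%nat); reflexivity.
Qed.

Lemma list_choice {A B : Type} (Rl : A -> B -> Prop) (l : list A) :
  (forall a, In a l -> exists b, Rl a b) -> exists bs, Forall2 Rl l bs.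
Proof.
  induction l as [|a l IH]; intros H.
  - exists nil. constructor.
  - destruct (H a (or_introl eq_refl)) as [b Hb].
    destruct IH as [bs Hbs]. intros a' Ha'. apply H. right; auto.
    exists (b :: bs). constructor; auto.
Qed.

Lemma concat_perm {A B P : Type} (sel : P -> B) (G : A -> list B) (l : list A) (bss : list (list P)) :
  List.Forall2 (fun w ps => Permutation (map sel ps) (G w)) l bss ->
  Permutation (map sel (concat bss)) (flat_map G l).
Proof.
  induction 1; simpl. constructor.
  rewrite map_app. apply Permutation_app; auto.
Qed.

Lemma flat_map_comp {A A' B : Type} (h : A -> A') (G : A' -> list B) (l : list A) :
  flat_map (fun w => G (h w)) l = flat_map G (map h l).
Proof. induction l; simpl; auto. rewrite IHl; auto. Qed.

Lemma Gamma_pos (gamma : nat -> R) (Hg : forall j, 1 <= gamma j) (j n : nat) : 0 < Gamma gamma j n.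
Proof.
  induction n; simpl. lra.
  apply Rmult_lt_0_compat; auto. apply Rinv_0_lt_compat. specialize (Hg (j + n)%nat). lra.
Qed.

Lemma pairing (X : nat -> Type) (rho : forall j, X j -> X j -> R)
  (T : forall j, X j -> X (S j)) (pre : forall j, X (S j) -> list (X j))
  (gamma xi : nat -> R)
  (Hpre : forall j (x : X (S j)) (y : X j), In y (pre j x) <-> T j y = x)
  (Hgamma : forall j, 1 <= gamma j)
  (Hpair : forall j (x x' : X (S j)), rho (S j) x x' <= xi (S j) ->
     exists ys ys' : list (X j),
       Permutation ys (pre j x) /\ Permutation ys' (pre j x') /\
       length ys = length ys' /\
       forall k y y', nth_error ys k = Some y -> nth_error ys' k = Some y' ->
         rho j y y' <= Rmin (/ gamma j * rho (S j) x x') (xi j))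
  (j n : nat) :
  forall (x x' : X (n + j)%nat), rho (n + j)%nat x x' <= xi (n + j)%nat ->
  exists ps : list (X j * X j),
    Permutation (map fst ps) (Pre X pre j n x) /\
    Permutation (map snd ps) (Pre X pre j n x') /\
    List.Forall (fun p => forall k, (k < n)%nat ->
       rho (k + j)%nat (Titer X T j k (fst p)) (Titer X T j k (snd p))
         <= Gamma gamma (j + k)%nat (n - k)%nat * rho (n + j)%nat x x' /\
       rho (k + j)%nat (Titer X T j k (fst p)) (Titer X T j k (snd p)) <= xi (k + j)%nat) ps.
Proof.
  induction n as [|m IH]; intros x x' Hxx.
  - exists ((x, x') :: nil). simpl. repeat split; try constructor; auto.
    intros k Hk; lia.
  - destruct (Hpair (m + j)%nat x x' Hxx) as (ys & ys' & Hy & Hy' & Hl & Hn).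
    destruct (pairs_of_nth _ ys ys' Hl Hn) as (wps & Hw1 & Hw2 & Hw3).
    set (Inv := fun (w : X (m + j)%nat * X (m + j)%nat) (ps : list (X j * X j)) =>
      Permutation (map fst ps) (Pre X pre j m (fst w)) /\
      Permutation (map snd ps) (Pre X pre j m (snd w)) /\
      List.Forall (fun p => forall k, (k < m)%nat ->
       rho (k + j)%nat (Titer X T j k (fst p)) (Titer X T j k (snd p))
         <= Gamma gamma (j + k)%nat (m - k)%nat * rho (m + j)%nat (fst w) (snd w) /\
       rho (k + j)%nat (Titer X T j k (fst p)) (Titer X T j k (snd p)) <= xi (k + j)%nat) ps).
    destruct (list_choice Inv wps) as [bss Hb].
    { intros w Hw. rewrite Forall_forall in Hw3. specialize (Hw3 w Hw).
      apply IH. eapply Rle_trans. apply Hw3. apply Rmin_r. }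
    exists (concat bss). split; [|split].
    + cbn [Pre]. eapply Permutation_trans.
      apply (concat_perm fst (fun w => Pre X pre j m (fst w)) wps bss).
      { eapply Forall2_impl; [|exact Hb]. intros a b [H1 _]. exact H1. }
      rewrite flat_map_comp. apply Permutation_flat_map. rewrite Hw1. exact Hy.
    + cbn [Pre]. eapply Permutation_trans.
      apply (concat_perm snd (fun w => Pre X pre j m (snd w)) wps bss).
      { eapply Forall2_impl; [|exact Hb]. intros a b [_ [H1 _]]. exact H1. }
      rewrite flat_map_comp. apply Permutation_flat_map. rewrite Hw2. exact Hy'.
    + apply Forall_concat.
      rewrite Forall_forall in Hw3.
      clear Hw1 Hw2 Hn Hl.
      induction Hb as [|w ps wps bss [Hp1 [Hp2 Hp3]] Hrest IHb]; constructor.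
      2:{ apply IHb. intros; apply Hw3; right; auto. }
      specialize (Hw3 w (or_introl eq_refl)). simpl in Hw3.
      assert (Hw4 : rho (m + j)%nat (fst w) (snd w) <= / gamma (m + j)%nat * rho (S m + j)%nat x x')
        by (eapply Rle_trans; [apply Hw3| apply Rmin_l]).
      assert (Hw5 : rho (m + j)%nat (fst w) (snd w) <= xi (m + j)%nat)
        by (eapply Rle_trans; [apply Hw3| apply Rmin_r]).
      rewrite Forall_forall in Hp3 |- *. intros p Hp k Hk.
      destruct (Nat.eq_dec k m) as [->|Hkm].
      * assert (E1 : Titer X T j m (fst p) = fst w).
        { apply (Pre_Titer X T pre Hpre). eapply Permutation_in. exact Hp1. apply in_map; auto. }
        assert (E2 : Titer X T j m (snd p) = snd w).
        { apply (Pre_Titer X T pre Hpre). eapply Permutation_in. exact Hp2. apply in_map; auto. }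
        rewrite E1, E2. split; auto.
        replace (S m - m)%nat with 1%nat by lia. simpl.
        replace (j + m + 0)%nat with (m + j)%nat by lia. rewrite Rmult_1_l; exact Hw4.
      * destruct (Hp3 p Hp k ltac:(lia)) as [Hk1 Hk2]. split; auto.
        replace (S m - k)%nat with (S (m - k)) by lia. simpl.
        replace (j + k + (m - k))%nat with (m + j)%nat by lia.
        pose proof (Gamma_pos gamma Hgamma (j + k) (m - k)).
        eapply Rle_trans. apply Hk1.
        rewrite Rmult_assoc. apply Rmult_le_compat_l; [lra| exact Hw4].
Qed.


Lemma rsum_le {A : Type} (F G : A -> R) (l : list A) :
  (forall y, In y l -> F y <= G y) -> rsum (map F l) <= rsum (map G l).
Proof.
  induction l as [|a l IH]; intros H; unfold rsum in *; simpl. lra.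
  apply Rplus_le_compat. apply H; left; auto. apply IH; intros; apply H; right; auto.
Qed.

Lemma rsum_lin {A : Type} (K1 K2 : R) (u v : A -> R) (l : list A) :
  rsum (map (fun p => K1 * u p + K2 * v p) l) = K1 * rsum (map u l) + K2 * rsum (map v l).
Proof. induction l; unfold rsum in *; simpl. ring. rewrite IHl. ring. Qed.

Lemma csum_minus {A : Type} (F G : A -> C) (l : list A) :
  Cminus (csum (map F l)) (csum (map G l)) = csum (map (fun y => Cminus (F y) (G y)) l).
Proof. induction l; unfold csum in *; simpl. ring. rewrite <- IHl. ring. Qed.

Lemma csum_minus_pairs {A : Type} (F : A -> C) (ps : list (A * A)) :
  Cminus (csum (map F (map fst ps))) (csum (map F (map snd ps)))
  = csum (map (fun p => Cminus (F (fst p)) (F (snd p))) ps).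
Proof. induction ps; unfold csum in *; simpl. ring. rewrite <- IHps. ring. Qed.

Lemma Cmod_RtoC_exp (a : R) : Cmod (RtoC (exp a)) = exp a.
Proof. rewrite Cmod_R. apply Rabs_right. left; apply exp_pos. Qed.

Lemma mul3_le (a a' b b' c c' : R) :
  0 <= a <= a' -> 0 <= b <= b' -> 0 <= c <= c' -> a * b * c <= a' * b' * c'.
Proof.
  intros Ha Hb Hc. apply Rmult_le_compat; nra.
Qed.

Lemma key (Y Z : Type) (rhoZ : Z -> Z -> R) (alpha xi : R) (P : Z -> list Y)
  (a s : Y -> R) (g : Y -> C) (z : C) (NS Gm Qa Qs : R) :
  0 <= NS -> 0 <= Gm -> 0 <= Qa -> 0 <= Qs ->
  (forall y, Rabs (s y) <= NS) -> (forall y, Cmod (g y) <= 1) ->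
  (forall x x', 0 < rhoZ x x' -> rhoZ x x' <= xi ->
     exists ps : list (Y * Y), Permutation (map fst ps) (P x) /\ Permutation (map snd ps) (P x') /\
       List.Forall (fun p => Rabs (a (fst p) - a (snd p)) <= Qa * Rpower (rhoZ x x') alpha /\
                        Rabs (s (fst p) - s (snd p)) <= Qs * Rpower (rhoZ x x') alpha /\
                        Cmod (Cminus (g (fst p)) (g (snd p))) <= Gm * Rpower (rhoZ x x') alpha) ps) ->
  let D := fun x => Cminus
     (csum (map (fun y => Cmult (cexp (Cplus (RtoC (a y)) (Cmult z (RtoC (s y))))) (g y)) (P x)))
     (csum (map (fun y => Cmult (cexp (Cplus (RtoC (a y)) (Cmult (RtoC 0) (RtoC (s y))))) (g y)) (P x))) in
  let L1 := fun x => rsum (map (fun y => exp (a y)) (P x)) in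
  let c := Cmod z * exp (Rabs (Re z) * NS) in
  (forall x, Cmod (D x) <= c * NS * L1 x) /\
  (forall x x', 0 < rhoZ x x' -> rhoZ x x' <= xi ->
     Cmod (Cminus (D x) (D x')) <= Rpower (rhoZ x x') alpha * (c * (Gm * NS + 2 * Qa * NS + Qs) * Rmax (L1 x) (L1 x'))).
Proof.
  intros HNS HGm HQa HQs Hs Hg Hpair D L1 c.
  set (Bf := fun y => Cminus (cexp (Cmult z (RtoC (s y)))) (RtoC 1)).
  set (t := fun y => Cmult (Cmult (RtoC (exp (a y))) (Bf y)) (g y)).
  assert (Hc : 0 <= c) by (apply Rmult_le_pos; [apply Cmod_ge_0| left; apply exp_pos]).
  assert (HD : forall x, D x = csum (map t (P x))).
  { intros x. unfold D. rewrite csum_minus. f_equal. apply map_ext. intros y.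
    unfold t, Bf. rewrite cexp_add. rewrite (cexp_real (RtoC (a y))) by reflexivity.
    rewrite (cexp_real (Cplus (RtoC (a y)) (Cmult (RtoC 0) (RtoC (s y))))).
    2:{ unfold Im; simpl; ring. }
    replace (Re (Cplus (RtoC (a y)) (Cmult (RtoC 0) (RtoC (s y))))) with (a y) by (unfold Re; simpl; ring).
    change (Re (RtoC (a y))) with (a y). ring. }
  assert (HRe : forall y, Re (Cmult z (RtoC (s y))) = Re z * s y) by (intros; unfold Re; simpl; ring).
  assert (HB : forall y, Cmod (Bf y) <= c * NS).
  { intros y. unfold Bf. eapply Rle_trans. apply cexp_m1_bound.
    rewrite Cmod_mult, Cmod_R, HRe. unfold c.
    pose proof (Hs y). pose proof (Cmod_ge_0 z). pose proof (Rabs_pos (s y)).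
    assert (exp (Rmax 0 (Re z * s y)) <= exp (Rabs (Re z) * NS)).
    { apply exp_le. apply Rmax_lub. apply Rmult_le_pos; [apply Rabs_pos | lra].
      eapply Rle_trans. apply Rle_abs. rewrite Rabs_mult. apply Rmult_le_compat_l; auto. apply Rabs_pos. }
    pose proof (exp_pos (Rmax 0 (Re z * s y))).
    replace (Cmod z * exp (Rabs (Re z) * NS) * NS) with ((Cmod z * NS) * exp (Rabs (Re z) * NS)) by ring.
    apply Rmult_le_compat; try nra. }
  assert (Ht : forall y, Cmod (t y) <= c * NS * exp (a y)).
  { intros y. unfold t. rewrite !Cmod_mult, Cmod_RtoC_exp.
    pose proof (HB y). pose proof (Hg y). pose proof (exp_pos (a y)).
    pose proof (Cmod_ge_0 (Bf y)). pose proof (Cmod_ge_0 (g y)).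
    assert (exp (a y) * Cmod (Bf y) <= exp (a y) * (c * NS)) by (apply Rmult_le_compat_l; lra).
    assert (exp (a y) * Cmod (Bf y) * Cmod (g y) <= exp (a y) * Cmod (Bf y) * 1)
      by (apply Rmult_le_compat_l; nra).
    nra. }
  split.
  - intros x. rewrite HD. eapply Rle_trans. apply Cmod_csum.
    rewrite map_map. eapply Rle_trans. apply (rsum_le _ (fun y => c * NS * exp (a y) + 0 * exp (a y))).
    { intros y _. specialize (Ht y). lra. }
    rewrite rsum_lin. unfold L1. lra.
  - intros x x' H1 H2. destruct (Hpair x x' H1 H2) as (ps & Hp1 & Hp2 & Hp3).
    set (Ra := Rpower (rhoZ x x') alpha).
    assert (HRa : 0 < Ra) by apply Rpower_pos.
    set (K1 := Ra * c * (Gm * NS + Qa * NS)).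
    set (K2 := Ra * c * (Qa * NS + Qs)).
    assert (HK1 : 0 <= K1) by (unfold K1; apply Rmult_le_pos; [apply Rmult_le_pos|]; nra).
    assert (HK2 : 0 <= K2) by (unfold K2; apply Rmult_le_pos; [apply Rmult_le_pos|]; nra).
    rewrite !HD.
    rewrite (csum_perm (map t (P x)) (map t (map fst ps))) by (apply Permutation_map; symmetry; auto).
    rewrite (csum_perm (map t (P x')) (map t (map snd ps))) by (apply Permutation_map; symmetry; auto).
    rewrite csum_minus_pairs.
    eapply Rle_trans. apply Cmod_csum. rewrite map_map.
    eapply Rle_trans. apply (rsum_le _ (fun p => K1 * exp (a (fst p)) + K2 * exp (a (snd p)))).
    { intros p Hp. rewrite Forall_forall in Hp3. destruct (Hp3 p Hp) as (Hda & Hds & Hdg).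
      fold Ra in Hda, Hds, Hdg. set (y := fst p) in *. set (y' := snd p) in *.
      replace (Cminus (t y) (t y')) with
        (Cplus (Cplus (Cmult (Cmult (RtoC (exp (a y))) (Bf y)) (Cminus (g y) (g y')))
                      (Cmult (Cmult (Cminus (RtoC (exp (a y))) (RtoC (exp (a y')))) (Bf y)) (g y')))
               (Cmult (Cmult (RtoC (exp (a y'))) (Cminus (Bf y) (Bf y'))) (g y'))) by (unfold t; ring).
      eapply Rle_trans. apply Cmod_triangle.
      eapply Rle_trans. apply Rplus_le_compat_r. apply Cmod_triangle.
      rewrite !Cmod_mult, !Cmod_RtoC_exp, <- RtoC_minus, Cmod_R.
      pose proof (exp_pos (a y)). pose proof (exp_pos (a y')).
      pose proof (HB y). pose proof (Hg y'). 
      assert (HdB : Cmod (Cminus (Bf y) (Bf y')) <= c * (Qs * Ra)).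
      { unfold Bf. replace (Cminus (Cminus (cexp (Cmult z (RtoC (s y)))) (RtoC 1))
                                   (Cminus (cexp (Cmult z (RtoC (s y')))) (RtoC 1)))
          with (Cminus (cexp (Cmult z (RtoC (s y)))) (cexp (Cmult z (RtoC (s y'))))) by ring.
        eapply Rle_trans. apply cexp_diff.
        replace (Cminus (Cmult z (RtoC (s y))) (Cmult z (RtoC (s y')))) with (Cmult z (RtoC (s y - s y')))
          by (rewrite RtoC_minus; ring).
        rewrite Cmod_mult, Cmod_R, !HRe. unfold c.
        assert (exp (Rmax (Re z * s y) (Re z * s y')) <= exp (Rabs (Re z) * NS)).
        { apply exp_le. pose proof (Hs y); pose proof (Hs y').
          apply Rmax_lub; (eapply Rle_trans; [apply Rle_abs| rewrite Rabs_mult; apply Rmult_le_compat_l; auto; apply Rabs_pos]). }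
        pose proof (Cmod_ge_0 z). pose proof (Rabs_pos (s y - s y')).
        pose proof (exp_pos (Rmax (Re z * s y) (Re z * s y'))).
        replace (Cmod z * exp (Rabs (Re z) * NS) * (Qs * Ra)) with (Cmod z * (Qs * Ra) * exp (Rabs (Re z) * NS)) by ring.
        apply Rmult_le_compat; try nra. }
      pose proof (exp_diff (a y) (a y')).
      pose proof (Cmod_ge_0 (Bf y)). pose proof (Cmod_ge_0 (g y')).
      pose proof (Cmod_ge_0 (Cminus (g y) (g y'))). pose proof (Rabs_pos (exp (a y) - exp (a y'))).
      pose proof (Cmod_ge_0 (Cminus (Bf y) (Bf y'))).
      assert (T1 : exp (a y) * Cmod (Bf y) * Cmod (Cminus (g y) (g y')) <= exp (a y) * (c * NS) * (Gm * Ra))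
        by (apply mul3_le; split; lra).
      assert (T2 : Rabs (exp (a y) - exp (a y')) * Cmod (Bf y) * Cmod (g y') <= (Qa * Ra * (exp (a y) + exp (a y'))) * (c * NS) * 1).
      { apply mul3_le; try (split; lra). split; auto. eapply Rle_trans. apply H5.
        apply Rmult_le_compat_r; [lra | exact Hda]. }
      assert (T3 : exp (a y') * Cmod (Cminus (Bf y) (Bf y')) * Cmod (g y') <= exp (a y') * (c * (Qs * Ra)) * 1)
        by (apply mul3_le; split; lra).
      unfold K1, K2. nra. }
    rewrite rsum_lin.
    assert (E1 : rsum (map (fun p => exp (a (fst p))) ps) = L1 x).
    { unfold L1. rewrite <- (map_map fst (fun y => exp (a y))). apply rsum_perm. apply Permutation_map. auto. }
    assert (E2 : rsum (map (fun p => exp (a (snd p))) ps) = L1 x').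
    { unfold L1. rewrite <- (map_map snd (fun y => exp (a y))). apply rsum_perm. apply Permutation_map. auto. }
    rewrite E1, E2.
    assert (L1 x <= Rmax (L1 x) (L1 x')) by apply Rmax_l.
    assert (L1 x' <= Rmax (L1 x) (L1 x')) by apply Rmax_r.
    replace (Ra * (c * (Gm * NS + 2 * Qa * NS + Qs) * Rmax (L1 x) (L1 x'))) with
      (K1 * Rmax (L1 x) (L1 x') + K2 * Rmax (L1 x) (L1 x')) by (unfold K1, K2; ring).
    apply Rplus_le_compat; apply Rmult_le_compat_l; auto.
Qed.


Lemma rsum_seq_S (F : nat -> R) (m : nat) :
  rsum (map F (seq 0 (S m))) = rsum (map F (seq 0 m)) + F m.
Proof. rewrite seq_S, map_app, rsum_app. unfold rsum; simpl. ring. Qed.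

Lemma rsum_seq_nonneg (F : nat -> R) (m : nat) : (forall k, 0 <= F k) -> 0 <= rsum (map F (seq 0 m)).
Proof. intros H. induction m. unfold rsum; simpl; lra. rewrite rsum_seq_S. specialize (H m). lra. Qed.

Lemma Ssum_diff (X : nat -> Type) (rho : forall j, X j -> X j -> R) (T : forall j, X j -> X (S j))
  (h : forall j, X j -> R) (hv : nat -> R) (gamma xi : nat -> R) (alpha : R)
  (Hg : forall j, 1 <= gamma j) (Hm : forall j, metric_diam1 (rho j)) (Ha : 0 < alpha)
  (Hhv0 : forall m, 0 <= hv m)
  (Hhv : forall m (u u' : X m), 0 < rho m u u' -> rho m u u' <= xi m ->
          Rabs (h m u - h m u') <= hv m * Rpower (rho m u u') alpha)
  (j n : nat) (y y' : X j) (r : R) (Hr : 0 < r)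
  (Hinv : forall k, (k < n)%nat ->
       rho (k + j)%nat (Titer X T j k y) (Titer X T j k y')
         <= Gamma gamma (j + k)%nat (n - k)%nat * r /\
       rho (k + j)%nat (Titer X T j k y) (Titer X T j k y') <= xi (k + j)%nat) :
  forall m, (m <= n)%nat ->
  Rabs (Ssum X T h j m y - Ssum X T h j m y') <=
  rsum (map (fun k => hv (j + k)%nat * Rpower (Gamma gamma (j + k)%nat (n - k)%nat) alpha) (seq 0 m))
  * Rpower r alpha.
Proof.
  induction m as [|m IH]; intros Hmn.
  - simpl. unfold rsum; simpl. rewrite Rminus_diag, Rabs_R0. lra.
  - rewrite rsum_seq_S. cbn [Ssum].
    specialize (IH ltac:(lia)).
    destruct (Hinv m ltac:(lia)) as [H1 H2].
    pose proof (Gamma_pos gamma Hg (j + m) (n - m)) as HG.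
    pose proof (Rpower_pos r alpha).
    assert (Hterm : Rabs (h (m + j)%nat (Titer X T j m y) - h (m + j)%nat (Titer X T j m y'))
              <= hv (j + m)%nat * Rpower (Gamma gamma (j + m) (n - m)) alpha * Rpower r alpha).
    { rewrite (Nat.add_comm j m) in *.
      destruct (Hm (m + j)%nat) as (Hm1 & Hm2 & _).
      pose proof (Hm1 (Titer X T j m y) (Titer X T j m y')) as Hnn.
      pose proof (Hhv0 (m + j)%nat). pose proof (Rpower_pos (Gamma gamma (m + j) (n - m)) alpha).
      destruct (Rle_lt_or_eq_dec _ _ Hnn) as [Hp|Hz].
      - eapply Rle_trans. apply Hhv; auto.
        rewrite Rmult_assoc. apply Rmult_le_compat_l; auto.
        rewrite Rpower_mult_distr by lra. apply Rle_Rpower_l; lra.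
      - symmetry in Hz. apply Hm2 in Hz. rewrite Hz, Rminus_diag, Rabs_R0.
        apply Rmult_le_pos; [apply Rmult_le_pos|]; lra. }
    replace (Ssum X T h j m y + h (m + j)%nat (Titer X T j m y) -
             (Ssum X T h j m y' + h (m + j)%nat (Titer X T j m y')))
      with ((Ssum X T h j m y - Ssum X T h j m y') +
            (h (m + j)%nat (Titer X T j m y) - h (m + j)%nat (Titer X T j m y'))) by ring.
    eapply Rle_trans. apply Rabs_triang. rewrite Rmult_plus_distr_r. lra.
Qed.

Lemma Ssum_bound (X : nat -> Type) (T : forall j, X j -> X (S j))
  (h : forall j, X j -> R) (sh : nat -> R)
  (Hsh : forall m (u : X m), Rabs (h m u) <= sh m) (j n : nat) (y : X j) :
  Rabs (Ssum X T h j n y) <= rsum (map (fun k => sh (k + j)%nat) (seq 0 n)).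
Proof.
  induction n.
  - simpl. unfold rsum; simpl. rewrite Rabs_R0; lra.
  - rewrite rsum_seq_S. cbn [Ssum]. eapply Rle_trans. apply Rabs_triang.
    specialize (Hsh (n + j)%nat (Titer X T j n y)). lra.
Qed.

Lemma Qsum_eval_gen (HV : nat -> Rbar) (G : nat -> R) (ks : list nat) :
  (forall k, is_finite (HV k)) ->
  fold_right Rbar_plus (Finite 0) (map (fun k => Rbar_mult (HV k) (Finite (G k))) ks)
  = Finite (rsum (map (fun k => real (HV k) * G k) ks)).
Proof.
  intros H. induction ks as [|k ks IH]; simpl. reflexivity.
  rewrite IH. rewrite <- (H k). simpl. reflexivity.
Qed.


Lemma csum_RtoC {A : Type} (F : A -> R) (l : list A) :
  csum (map (fun y => RtoC (F y)) l) = RtoC (rsum (map F l)).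
Proof. induction l; unfold csum, rsum in *; simpl. reflexivity. rewrite IHl, RtoC_plus. reflexivity. Qed.

Lemma holder_norm_nonneg {A : Type} (rho : A -> A -> R) (alpha r : R) (g : A -> C) :
  Rbar_le (Finite 0) (holder_norm rho alpha r g).
Proof.
  unfold holder_norm.
  pose proof (sup_nonneg (fun t => exists x, t = Finite (Cmod (g x)))) as H1.
  pose proof (sup_nonneg (fun t => exists x x', 0 < rho x x' /\ rho x x' <= r /\
       t = Finite (Cmod (Cminus (g x) (g x')) / Rpower (rho x x') alpha))) as H2.
  change (Rbar_le (Finite 0) (supnorm g)) in H1.
  change (Rbar_le (Finite 0) (holder_var rho alpha r g)) in H2.
  destruct (supnorm g); destruct (holder_var rho alpha r g); simpl in *; try tauto; lra.
Qed.

Lemma mult_mono (a : R) (H1 H2 : Rbar) : 0 < a -> Rbar_le (Finite 0) H1 -> Rbar_le H1 H2 ->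
  Rbar_le (Rbar_mult (Finite a) H1) (Rbar_mult (Finite a) H2).
Proof.
  intros Ha Hn Hle.
  destruct H1 as [h1| |]; destruct H2 as [h2| |]; simpl in Hn, Hle; try tauto.
  - simpl. apply Rmult_le_compat_l; lra.
  - rewrite mult_pinf by auto. simpl; auto.
  - rewrite mult_pinf by auto. simpl; auto.
Qed.

Lemma mult_nonneg (a : R) (H : Rbar) : 0 < a -> Rbar_le (Finite 0) H -> Rbar_le (Finite 0) (Rbar_mult (Finite a) H).
Proof.
  intros Ha Hn. destruct H as [h| |]; simpl in Hn; try tauto.
  - simpl. apply Rmult_le_pos; lra.
  - rewrite mult_pinf by auto. simpl; auto.
Qed.

Lemma zero_norm {A : Type} (rho : A -> A -> R) (alpha r : R) :
  Rbar_le (holder_norm rho alpha r (fun _ => RtoC 0)) (Finite 1).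
Proof.
  eapply Rbar_le_trans. apply (hn_le_fin rho alpha r _ 0 0); try lra.
  - intros; rewrite Cmod_0; lra.
  - intros. replace (Cminus (RtoC 0) (RtoC 0)) with (RtoC 0) by ring. rewrite Cmod_0.
    rewrite Rmult_0_r; lra.
  - simpl; lra.
Qed.


Theorem lemma7p3
  (X : nat -> Type) (rho : forall j, X j -> X j -> R)
  (T : forall j, X j -> X (S j)) (pre : forall j, X (S j) -> list (X j))
  (gamma xi : nat -> R) (phi f : forall j, X j -> R) (alpha : R)
  (Hrho : forall j, metric_diam1 (rho j))
  (Hpre : forall j (x : X (S j)) (y : X j), In y (pre j x) <-> T j y = x)
  (Hnodup : forall j (x : X (S j)), NoDup (pre j x))
  (Hgamma : forall j, 1 <= gamma j)
  (Hxi : forall j, 0 < xi j <= 1)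
  (Hpair : forall j (x x' : X (S j)), rho (S j) x x' <= xi (S j) ->
     exists ys ys' : list (X j),
       Permutation ys (pre j x) /\ Permutation ys' (pre j x') /\
       length ys = length ys' /\
       forall k y y', nth_error ys k = Some y -> nth_error ys' k = Some y' ->
         rho j y y' <= Rmin (/ gamma j * rho (S j) x x') (xi j))
  (Hphi : forall j, is_finite (holder_norm (rho j) alpha 1 (fun x => RtoC (phi j x))))
  (Hf : forall j, is_finite (holder_norm (rho j) alpha 1 (fun x => RtoC (f j x))))
  (Halpha : 0 < alpha <= 1) :
  let Rjn := fun (j n : nat) (z : C) =>
    let NSf := supnorm (fun x => RtoC (Ssum X T f j n x)) in
    Rbar_mult (Finite (Cmod z * exp (Rabs (Re z) * real NSf)))
      (Rbar_mult (supnorm (Lit X pre phi f (RtoC 0) j n (fun _ => RtoC 1)))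
        (Rbar_plus
          (Rbar_mult
            (Rbar_plus (Finite (1 + Rpower (Gamma gamma j n) alpha))
                       (Rbar_mult (Finite 2) (Qsum X rho gamma xi alpha phi j n)))
            NSf)
          (Qsum X rho gamma xi alpha f j n))) in
  (forall (j n : nat) (z : C) (g : X j -> C), (1 <= n)%nat ->
     Rbar_le (holder_norm (rho j) alpha (xi j) g) (Finite 1) ->
     Rbar_le (holder_norm (rho (n + j)%nat) alpha (xi (n + j)%nat)
                (fun x => Cminus (Lit X pre phi f z j n g x) (Lit X pre phi f (RtoC 0) j n g x)))
             (Rjn j n z)) /\
  (forall (j n : nat) (z : C), (1 <= n)%nat ->
     Rbar_le (opnorm (rho j) (rho (n + j)%nat) alpha
                (fun g x => Cminus (Lit X pre phi f z j n g x) (Lit X pre phi f (RtoC 0) j n g x)))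
             (Rbar_mult (Finite (3 / xi (n + j)%nat)) (Rjn j n z))).
Proof.
  intros Rjn.
  set (hvr := fun (h : forall j, X j -> R) (m : nat) =>
                real (holder_var (rho m) alpha (xi m) (fun x => RtoC (h m x)))).
  assert (Hvfin : forall h, (forall j, is_finite (holder_norm (rho j) alpha 1 (fun x => RtoC (h j x)))) ->
             forall m, is_finite (holder_var (rho m) alpha (xi m) (fun x => RtoC (h m x)))).
  { intros h Hh m. apply hv_fin_small. apply Hxi. apply Hh. }
  assert (Hv0 : forall h, (forall j, is_finite (holder_norm (rho j) alpha 1 (fun x => RtoC (h j x)))) ->
             forall m, 0 <= hvr h m).
  { intros h Hh m. unfold hvr.
    pose proof (sup_nonneg (fun t => exists x x', 0 < rho m x x' /\ rho m x x' <= xi m /\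
       t = Finite (Cmod (Cminus (RtoC (h m x)) (RtoC (h m x'))) / Rpower (rho m x x') alpha))) as H2.
    change (Rbar_le (Finite 0) (holder_var (rho m) alpha (xi m) (fun x => RtoC (h m x)))) in H2.
    rewrite <- (Hvfin h Hh m) in H2. exact H2. }
  assert (Hvb : forall h, (forall j, is_finite (holder_norm (rho j) alpha 1 (fun x => RtoC (h j x)))) ->
             forall m (u u' : X m), 0 < rho m u u' -> rho m u u' <= xi m ->
             Rabs (h m u - h m u') <= hvr h m * Rpower (rho m u u') alpha).
  { intros h Hh m u u' H1 H2.
    pose proof (hv_bound (rho m) alpha (xi m) (fun x => RtoC (h m x)) u u' (Hvfin h Hh m) H1 H2) as H.
    simpl in H. rewrite <- RtoC_minus, Cmod_R in H. exact H. }
  assert (P1 : forall (j n : nat) (z : C) (g : X j -> C), (1 <= n)%nat ->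
     Rbar_le (holder_norm (rho j) alpha (xi j) g) (Finite 1) ->
     Rbar_le (holder_norm (rho (n + j)%nat) alpha (xi (n + j)%nat)
                (fun x => Cminus (Lit X pre phi f z j n g x) (Lit X pre phi f (RtoC 0) j n g x)))
             (Rjn j n z)).
  { intros j n z g Hn Hg.
    set (sh := fun m => real (supnorm (fun x => RtoC (f m x)))).
    assert (Hsh : forall m (u : X m), Rabs (f m u) <= sh m).
    { intros m u. unfold sh. rewrite <- Cmod_R. apply (sn_bound (fun x => RtoC (f m x)) u).
      destruct (holder_fin _ _ _ _ (Hf m)) as [H _]. exact H. }
    assert (Hsh0 : forall m, 0 <= sh m).
    { intros m. unfold sh. destruct (holder_fin _ _ _ _ (Hf m)) as [H _].
      pose proof (sup_nonneg (fun t => exists x, t = Finite (Cmod (RtoC (f m x))))) as H1.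
      change (Rbar_le (Finite 0) (supnorm (fun x => RtoC (f m x)))) in H1.
      rewrite <- H in H1. exact H1. }
    set (B := rsum (map (fun k => sh (k + j)%nat) (seq 0 n))).
    assert (HNSle : Rbar_le (supnorm (fun x => RtoC (Ssum X T f j n x))) (Finite B)).
    { apply sup_le. simpl. apply rsum_seq_nonneg. intros k. apply Hsh0.
      intros t [x ->]. simpl. rewrite Cmod_R. apply Ssum_bound. exact Hsh. }
    assert (HNS : supnorm (fun x => RtoC (Ssum X T f j n x))
                  = Finite (real (supnorm (fun x => RtoC (Ssum X T f j n x))))).
    { apply (fin_of_le _ B). apply sup_nonneg. exact HNSle. }
    set (ns := real (supnorm (fun x => RtoC (Ssum X T f j n x)))) in *.
    assert (Hns : forall y, Rabs (Ssum X T f j n y) <= ns).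
    { intros y. rewrite <- Cmod_R. apply (sn_bound (fun x => RtoC (Ssum X T f j n x)) y).
      unfold is_finite. rewrite HNS. reflexivity. }
    assert (Hns0 : 0 <= ns).
    { pose proof (sup_nonneg (fun t => exists x, t = Finite (Cmod (RtoC (Ssum X T f j n x))))) as H1.
      change (Rbar_le (Finite 0) (supnorm (fun x => RtoC (Ssum X T f j n x)))) in H1.
      rewrite HNS in H1. exact H1. }
    set (qp := rsum (map (fun k => hvr phi (j + k)%nat * Rpower (Gamma gamma (j + k)%nat (n - k)%nat) alpha) (seq 0 n))).
    set (qf := rsum (map (fun k => hvr f (j + k)%nat * Rpower (Gamma gamma (j + k)%nat (n - k)%nat) alpha) (seq 0 n))).
    assert (HQp : Qsum X rho gamma xi alpha phi j n = Finite qp).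
    { unfold Qsum, qp, hvr.
      apply (Qsum_eval_gen (fun k => holder_var (rho (j + k)%nat) alpha (xi (j + k)%nat) (fun x => RtoC (phi (j + k)%nat x)))
               (fun k => Rpower (Gamma gamma (j + k)%nat (n - k)%nat) alpha)).
      intros k; apply Hvfin; auto. }
    assert (HQf : Qsum X rho gamma xi alpha f j n = Finite qf).
    { unfold Qsum, qf, hvr.
      apply (Qsum_eval_gen (fun k => holder_var (rho (j + k)%nat) alpha (xi (j + k)%nat) (fun x => RtoC (f (j + k)%nat x)))
               (fun k => Rpower (Gamma gamma (j + k)%nat (n - k)%nat) alpha)).
      intros k; apply Hvfin; auto. }
    assert (Hqp0 : 0 <= qp).
    { apply rsum_seq_nonneg. intros k. apply Rmult_le_pos. apply Hv0; auto. left; apply Rpower_pos. }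
    assert (Hqf0 : 0 <= qf).
    { apply rsum_seq_nonneg. intros k. apply Rmult_le_pos. apply Hv0; auto. left; apply Rpower_pos. }
    set (Ga := Rpower (Gamma gamma j n) alpha).
    assert (HGa : 0 < Ga) by apply Rpower_pos.
    unfold Rjn. cbv zeta. rewrite HNS, HQp, HQf. change (real (Finite ns)) with ns.
    assert (EK : Rbar_plus (Rbar_mult (Rbar_plus (Finite (1 + Rpower (Gamma gamma j n) alpha)) (Rbar_mult (Finite 2) (Finite qp))) (Finite ns)) (Finite qf)
      = Finite (ns + (Ga * ns + 2 * qp * ns + qf))) by (unfold Ga; simpl; f_equal; ring).
    rewrite EK.
    destruct (holder_parts _ _ _ _ _ Hg) as [Hgs Hgv].
    assert (Hgsf : is_finite (supnorm g)).
    { pose proof (sup_nonneg (fun t => exists x, t = Finite (Cmod (g x)))) as H1.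
      change (Rbar_le (Finite 0) (supnorm g)) in H1. unfold is_finite.
      destruct (supnorm g); simpl in *; tauto. }
    assert (Hgvf : is_finite (holder_var (rho j) alpha (xi j) g)).
    { pose proof (sup_nonneg (fun t => exists x x', 0 < rho j x x' /\ rho j x x' <= xi j /\
       t = Finite (Cmod (Cminus (g x) (g x')) / Rpower (rho j x x') alpha))) as H1.
      change (Rbar_le (Finite 0) (holder_var (rho j) alpha (xi j) g)) in H1. unfold is_finite.
      destruct (holder_var (rho j) alpha (xi j) g); simpl in *; tauto. }
    assert (Hg1 : forall y, Cmod (g y) <= 1).
    { intros y. eapply Rle_trans. apply (sn_bound g y Hgsf). rewrite <- Hgsf in Hgs. exact Hgs. }
    assert (Hgv1 : real (holder_var (rho j) alpha (xi j) g) <= 1).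
    { rewrite <- Hgvf in Hgv. exact Hgv. }
    assert (Hgv0 : 0 <= real (holder_var (rho j) alpha (xi j) g)).
    { pose proof (sup_nonneg (fun t => exists x x', 0 < rho j x x' /\ rho j x x' <= xi j /\
       t = Finite (Cmod (Cminus (g x) (g x')) / Rpower (rho j x x') alpha))) as H1.
      change (Rbar_le (Finite 0) (holder_var (rho j) alpha (xi j) g)) in H1.
      rewrite <- Hgvf in H1. exact H1. }
    assert (Hpk : forall (x x' : X (n + j)%nat), 0 < rho (n + j)%nat x x' -> rho (n + j)%nat x x' <= xi (n + j)%nat ->
     exists ps : list (X j * X j), Permutation (map fst ps) (Pre X pre j n x) /\ Permutation (map snd ps) (Pre X pre j n x') /\
       List.Forall (fun p => Rabs (Ssum X T phi j n (fst p) - Ssum X T phi j n (snd p)) <= qp * Rpower (rho (n + j)%nat x x') alpha /\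
                        Rabs (Ssum X T f j n (fst p) - Ssum X T f j n (snd p)) <= qf * Rpower (rho (n + j)%nat x x') alpha /\
                        Cmod (Cminus (g (fst p)) (g (snd p))) <= Ga * Rpower (rho (n + j)%nat x x') alpha) ps).
    { intros x x' H1 H2.
      destruct (pairing X rho T pre gamma xi Hpre Hgamma Hpair j n x x' H2) as (ps & Hp1 & Hp2 & Hp3).
      exists ps. split; [exact Hp1| split; [exact Hp2|]].
      rewrite Forall_forall in *. intros p Hp. specialize (Hp3 p Hp).
      split; [|split].
      - exact (Ssum_diff X rho T phi (hvr phi) gamma xi alpha Hgamma Hrho (proj1 Halpha) (Hv0 phi Hphi)
                 (Hvb phi Hphi) j n (fst p) (snd p) (rho (n + j)%nat x x') H1 Hp3 n (le_n n)).
      - exact (Ssum_diff X rho T f (hvr f) gamma xi alpha Hgamma Hrho (proj1 Halpha) (Hv0 f Hf)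
                 (Hvb f Hf) j n (fst p) (snd p) (rho (n + j)%nat x x') H1 Hp3 n (le_n n)).
      - destruct (Hp3 0%nat ltac:(lia)) as [Hg0 Hg0']. simpl in Hg0, Hg0'.
        rewrite Nat.add_0_r, Nat.sub_0_r in Hg0.
        destruct (Hrho j) as (Hm1 & Hm2 & _).
        pose proof (Gamma_pos gamma Hgamma j n) as HGp.
        pose proof (Rpower_pos (rho (n + j)%nat x x') alpha).
        destruct (Rle_lt_or_eq_dec _ _ (Hm1 (fst p) (snd p))) as [Hpos|Hz].
        + eapply Rle_trans. apply (hv_bound (rho j) alpha (xi j) g (fst p) (snd p) Hgvf Hpos Hg0').
          unfold Ga. rewrite Rpower_mult_distr by lra.
          pose proof (Rpower_pos (rho j (fst p) (snd p)) alpha).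
          apply Rle_trans with (1 * Rpower (rho j (fst p) (snd p)) alpha).
          apply Rmult_le_compat_r; lra.
          rewrite Rmult_1_l. apply Rle_Rpower_l; lra.
        + symmetry in Hz. apply Hm2 in Hz. rewrite Hz.
          replace (Cminus (g (snd p)) (g (snd p))) with (RtoC 0) by ring. rewrite Cmod_0.
          apply Rmult_le_pos; lra. }
    destruct (key (X j) (X (n + j)%nat) (rho (n + j)%nat) alpha (xi (n + j)%nat) (Pre X pre j n)
               (Ssum X T phi j n) (Ssum X T f j n) g z ns Ga qp qf Hns0 (Rlt_le _ _ HGa) Hqp0 Hqf0 Hns Hg1 Hpk)
      as [KB1 KB2].
    assert (Hc : 0 <= Cmod z * exp (Rabs (Re z) * ns))
      by (apply Rmult_le_pos; [apply Cmod_ge_0| left; apply exp_pos]).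
    apply (final_rbar _ _ _ _ (fun x => rsum (map (fun y => exp (Ssum X T phi j n y)) (Pre X pre j n x)))).
    - exact Hc.
    - exact Hns0.
    - apply Rplus_le_le_0_compat; [apply Rplus_le_le_0_compat|]; try lra.
      apply Rmult_le_pos; lra. apply Rmult_le_pos; lra.
    - intros x. apply rsum_nonneg. rewrite Forall_forall. intros r Hr. apply in_map_iff in Hr.
      destruct Hr as [y [<- _]]. left; apply exp_pos.
    - intros x. eapply Rbar_le_trans; [| apply sup_ge; exists x; reflexivity].
      simpl. rewrite (Lit_sum X T pre phi f Hpre).
      rewrite (map_ext _ (fun y => RtoC (exp (Ssum X T phi j n y)))).
      2:{ intros y. rewrite cexp_real. 2:{ unfold Im; simpl; ring. }
          replace (Re (Cplus (RtoC (Ssum X T phi j n y)) (Cmult (RtoC 0) (RtoC (Ssum X T f j n y)))))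
            with (Ssum X T phi j n y) by (unfold Re; simpl; ring). ring. }
      rewrite csum_RtoC, Cmod_R. apply Rle_abs.
    - apply sup_nonneg.
    - intros x. simpl. rewrite !(Lit_sum X T pre phi f Hpre). apply KB1.
    - intros x x' H1 H2. simpl. rewrite !(Lit_sum X T pre phi f Hpre). apply KB2; auto. }
  split.
  - exact P1.
  - intros j n z Hn. unfold opnorm.
    assert (H3 : 0 < 3 / xi (n + j)%nat) by (apply Rdiv_lt_0_compat; [lra| apply Hxi]).
    apply sup_le.
    + apply mult_nonneg; auto.
      apply (Rbar_le_trans _ _ _ (holder_norm_nonneg (rho (n + j)%nat) alpha (xi (n + j)%nat)
         (fun x => Cminus (Lit X pre phi f z j n (fun _ => RtoC 0) x) (Lit X pre phi f (RtoC 0) j n (fun _ => RtoC 0) x)))).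
      apply P1; auto. apply zero_norm.
    + intros t (g & Hg & ->). cbv beta.
      assert (Hgx : Rbar_le (holder_norm (rho j) alpha (xi j) g) (Finite 1)).
      { eapply Rbar_le_trans; [| exact Hg]. unfold holder_norm. apply Rbar_plus_le_compat.
        apply Rbar_le_refl. apply hv_mono. apply Hxi. }
      eapply Rbar_le_trans. apply holder1_le; auto.
      apply mult_mono; [auto | apply holder_norm_nonneg | apply P1; auto].
Qed.
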